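(* Let $m>0$ be an even integer. If there exists a classical deterministic winning strategy for the matching game with parameter $m$, then there exist a graph $G=(V,E)$ with $|V|=m$ and a function $h:E\to\{0,1\}$ such that (1) there are at least $\dfrac{2^m}{2^{\lceil\log_2 m\rceil}}$ colourings of $G$ according to $h$, and (2) $G$ contains a connected component with more than $\frac{m}{2}$ vertices. (Equivalently: to show there is no classical deterministic winning strategy for parameter $m$, it suffices to show no such $G$ and $h$ exist.)
   Context: A perfect matching on $\{0,\ldots,m-1\}$ ($m$ even) is a partition of this set into $m/2$ sets of cardinality 2; $M_m$ denotes the set of all perfect matchings. Let $L=\lceil\log_2 m\rceil$. For $n\in\{0,\ldots,m-1\}$, $\bar n\in\{0,1\}^L$ is the $L$-bit binary representation of $n$, most significant bit first. On bit strings $\oplus$ is bitwise, and $u\cdot v=\bigoplus_i(u_i\wedge v_i)$. The matching game with parameter $m$: Alice receives $x\in\{0,1\}^m$ and outputs $a\in\{0,1\}^L$; Bob receives $y\in M_m$ and outputs a two-element set $\{b_1,b_2\}\subseteq\{0,\ldots,m-1\}$ and a string $b\in\{0,1\}^L$; they win on question $(x,y)$ iff $\{b_1,b_2\}\in y$ and $x_{b_1}\oplus x_{b_2}=(\bar b_1\oplus\bar b_2)\cdot(a\oplus b)$. A classical deterministic strategy is a pair of functions $s_A:\{0,1\}^m\to\{0,1\}^L$ and $s_B:M_m\to\{\text{two-element subsets of }\{0,\ldots,m-1\}\}\times\{0,1\}^L$; it is winning if $(s_A(x),s_B(y))$ wins on every question $(x,y)\in\{0,1\}^m\times M_m$. Given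 a graph $G=(V,E)$ and $h:E\to\{0,1\}$, a colouring of $G$ according to $h$ is a function $c:V\to\{0,1\}$ with $c(u)\oplus c(v)=h(\{u,v\})$ for every edge $\{u,v\}\in E$. A connected component is a nonempty maximal connected induced subgraph. *)

(* Defs.v *)
From mathcomp Require Import all_boot.
Set Implicit Arguments. Unset Strict Implicit. Unset Printing Implicit Defensive.

(* L = ceil(log2 m): up_log 2 m is the smallest e with m <= 2^e. *)
Definition Lbits (m : nat) : nat := up_log 2 m.

Definition bitstr (L : nat) := {ffun 'I_L -> bool}.

Definition bxor L (u v : bitstr L) : bitstr L := [ffun i => u i (+) v i].

Definition bdot L (u v : bitstr L) : bool := \big[addb/false]_(i < L) (u i && v i).

(* L-bit binary representation of n, most significant bit first:
   position i (0-based) holds bit number L-1-i of n. *)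
Definition bin (L n : nat) : bitstr L := [ffun i : 'I_L => odd (n %/ 2 ^ (L - 1 - i))].

Definition perfect_matching (m : nat) (y : {set {set 'I_m}}) : bool :=
  partition y [set: 'I_m] && [forall B in y, #|B| == 2].

Definition wins (m : nat) (x : {ffun 'I_m -> bool}) (y : {set {set 'I_m}})
  (a : bitstr (Lbits m)) (S : {set 'I_m}) (b : bitstr (Lbits m)) : Prop :=
  exists b1 b2 : 'I_m, [/\ b1 != b2, S = [set b1; b2], S \in y &
     x b1 (+) x b2 = bdot (bxor (bin (Lbits m) b1) (bin (Lbits m) b2)) (bxor a b)].

Definition winning_strategy (m : nat)
  (sA : {ffun 'I_m -> bool} -> bitstr (Lbits m))
  (sB : {set {set 'I_m}} -> {set 'I_m} * bitstr (Lbits m)) : Prop :=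
  (forall y, perfect_matching y -> #|(sB y).1| = 2) /\
  forall x y, perfect_matching y -> wins x y (sA x) (sB y).1 (sB y).2.

Definition simple_edges (m : nat) (E : {set {set 'I_m}}) : bool :=
  [forall e in E, #|e| == 2].

Definition colouring (m : nat) (E : {set {set 'I_m}}) (h : {set 'I_m} -> bool)
  (c : {ffun 'I_m -> bool}) : bool :=
  [forall u, forall v, ([set u; v] \in E) ==> (c u (+) c v == h [set u; v])].

Definition adj (m : nat) (E : {set {set 'I_m}}) : rel 'I_m :=
  fun u v => (u != v) && ([set u; v] \in E).

Definition component (m : nat) (E : {set {set 'I_m}}) (x : 'I_m) : {set 'I_m} :=
  [set y | connect (adj E) x y].

(* Main.v *)
Require Import Defs.
From mathcomp Require Import all_boot zify.

Lemma adj_sym m (E : {set {set 'I_m}}) : symmetric (adj E).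
Proof. by move=> u v; rewrite /adj eq_sym setUC. Qed.

Lemma big_block m (E : {set {set 'I_m}}) (s : seq 'I_m) n lo x0 :
  uniq s -> size s = m -> lo + n < m ->
  (forall p, lo <= p <= lo + n -> connect (adj E) (nth x0 s lo) (nth x0 s p)) ->
  n < #|component E (nth x0 s lo)|.
Proof.
move=> us ss hlo hc.
pose f := fun p : 'I_n.+1 => nth x0 s (lo + p).
have finj : injective f.
  move=> p q /eqP; rewrite /f nth_uniq ?ss //; last 2 first.
  - by have := ltn_ord p; lia.
  - by have := ltn_ord q; lia.
  by rewrite eqn_add2l => /eqP /val_inj.
have : [set f p | p in 'I_n.+1] \subset component E (nth x0 s lo).
  apply/subsetP => z /imsetP [p _ ->]; rewrite inE; apply: hc.
  by have := ltn_ord p; lia.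
move/subset_leq_card; rewrite card_imset // card_ord. done.
Qed.

Lemma matching_avoid m (E : {set {set 'I_m}}) : 0 < m -> ~~ odd m ->
  (forall x, 2 * #|component E x| <= m) ->
  exists y, perfect_matching y /\ forall S, S \in y -> S \notin E.
Proof.
move=> Hm Hev Hsmall.
set e := adj E.
have csym : connect_sym e := sym_connect_sym (@adj_sym m E).
set n := m./2.
have mn : m = n + n.
  by move: (odd_double_half m); rewrite (negbTE Hev) add0n -addnn.
pose leT := fun u v : 'I_m => val (root e u) <= val (root e v).
pose s := sort leT (enum 'I_m).
have ps : perm_eq s (enum 'I_m) by rewrite perm_sort perm_refl.
have us : uniq s by rewrite (perm_uniq ps) enum_uniq.
have ss : size s = m by rewrite (perm_size ps) size_enum_ord.
have ins : forall v, v \in s by move=> v; rewrite (perm_mem ps) mem_enum.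
have srt : sorted leT s := sort_sorted (fun u v => leq_total _ _) _.
have mono : forall x0 i j, i <= j -> j < m -> leT (nth x0 s i) (nth x0 s j).
  move=> x0 i j ij jm.
  apply: (sorted_leq_nth (fun a b c => @leq_trans _ _ _) (fun a => leqnn _) x0 srt) => //;
    rewrite inE ss //; lia.
have bad : forall lo x0, lo + n < m -> ~~ connect e (nth x0 s lo) (nth x0 s (lo + n)).
  move=> lo x0 hlo; apply/negP => c.
  have r1 : root e (nth x0 s lo) = root e (nth x0 s (lo + n)) by apply/(rootP csym).
  have hc : forall p, lo <= p <= lo + n -> connect e (nth x0 s lo) (nth x0 s p).
    move=> p /andP[h1 h2]; apply/(rootP csym); apply: val_inj.
    have := mono x0 _ _ h1 (leq_ltn_trans h2 hlo).
    have := mono x0 _ _ h2 hlo.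
    rewrite /leT -r1; lia.
  have := @big_block m E s n lo x0 us ss hlo hc.
  have := Hsmall (nth x0 s lo); lia.
have idx : forall v, index v s < m by move=> v; rewrite -{2}ss index_mem.
have nth_idx : forall w v, nth w s (index v s) = v.
  by move=> w v; rewrite (set_nth_default v) ?ss ?idx // nth_index.
pose sig v := nth v s ((index v s + n) %% m).
have sig_idx : forall v, index (sig v) s = (index v s + n) %% m.
  by move=> v; rewrite index_uniq // ss ltn_pmod.
have sigK : forall v, sig (sig v) = v.
  move=> v; rewrite {1}/sig sig_idx modnDml -addnA -mn modnDr modn_small ?idx //.
have mod_cases : forall v, (index v s < n /\ (index v s + n) %% m = index v s + n)
    \/ (n <= index v s /\ (index v s + n) %% m = index v s - n).
  move=> v; have := idx v; case: (ltnP (index v s) n) => h hi.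
    by left; split => //; rewrite modn_small //; lia.
  right; split => //.
  have -> : index v s + n = (index v s - n) + m by lia.
  by rewrite modnDr modn_small //; lia.
have sig_neq : forall v, sig v != v.
  move=> v; apply/negP => /eqP h.
  have : index (sig v) s = index v s by rewrite h.
  have := Hm; rewrite sig_idx; case: (mod_cases v) => [] [h1 ->]; lia.
have sig_nc : forall v, ~~ connect e v (sig v).
  move=> v; rewrite /sig; case: (mod_cases v) => [] [h1 ->].
    rewrite -{1}(nth_idx v v); apply: bad; have := idx v; lia.
  have hv : nth v s (index v s - n + n) = v by rewrite subnK // nth_idx.
  rewrite csym -{3}hv; apply: bad; have := idx v; lia.
have pair_eq : forall u w, w \in [set u; sig u] -> [set u; sig u] = [set w; sig w].
  move=> u w; rewrite !inE => /orP[] /eqP ->; first by [].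
  by rewrite sigK setUC.
exists [set [set v; sig v] | v : 'I_m]; split.
  apply/andP; split.
    apply/and3P; split.
    - apply/eqP/setP => w; rewrite inE; apply/bigcupP; exists [set w; sig w].
        exact: imset_f.
      by rewrite set21.
    - apply/trivIsetP => A B /imsetP[u _ ->] /imsetP[v _ ->] neq.
      rewrite -setI_eq0; apply/eqP/setP => w; rewrite inE in_set0; apply/negP => /andP[h1 h2].
      by move: neq; rewrite (pair_eq _ _ h1) (pair_eq _ _ h2) eqxx.
    - apply/imsetP => [[v _ /setP /(_ v)]]; rewrite !inE eqxx //.
  apply/forallP => B; apply/implyP => /imsetP[v _ ->].
  by rewrite cards2 (eq_sym v) sig_neq.
move=> S /imsetP[v _ ->]; apply/negP => SE.
apply: (negP (sig_nc v)); apply: connect1.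
by rewrite /e /adj (eq_sym v) sig_neq SE.
Qed.

Lemma wins_uv m (x : {ffun 'I_m -> bool}) y a S b : wins x y a S b ->
  forall u v : 'I_m, u != v -> [set u; v] = S ->
  x u (+) x v = bdot (bxor (bin (Lbits m) u) (bin (Lbits m) v)) (bxor a b).
Proof.
case=> b1 [b2 [n12 -> _ heq]] u v nuv h.
have hu : u \in [set b1; b2] by rewrite -h set21.
have hv : v \in [set b1; b2] by rewrite -h set22.
move: hu hv; rewrite !inE => /orP[]/eqP hu /orP[]/eqP hv; subst.
- by rewrite eqxx in nuv.
- by [].
- rewrite addbC heq; congr bdot; apply/ffunP => i; rewrite !ffunE addbC //.
- by rewrite eqxx in nuv.
Qed.

Theorem corollary1 (m : nat) (Hm : 0 < m) (Heven : ~~ odd m) :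
  (exists (sA : {ffun 'I_m -> bool} -> bitstr (Lbits m))
          (sB : {set {set 'I_m}} -> {set 'I_m} * bitstr (Lbits m)),
      winning_strategy sA sB) ->
  exists (E : {set {set 'I_m}}) (h : {set 'I_m} -> bool),
    [/\ simple_edges E,
        2 ^ m <= 2 ^ Lbits m * #|[set c : {ffun 'I_m -> bool} | colouring E h c]|
      & exists x : 'I_m, m < 2 * #|component E x|].
Proof.
move=> [sA [sB [hcard hwin]]].
pose fib a := [set x | sA x == a].
have hsum : 2 ^ m = \sum_(a : bitstr (Lbits m)) #|fib a|.
  rewrite -{1}card_bool -{1}(card_ord m) -card_ffun -sum1_card.
  rewrite (partition_big (fun x => sA x) xpredT) //=.
  by apply: eq_bigr => a _; rewrite sum1dep_card.
pose a0 := sA [ffun=> false].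
case: (@arg_maxnP _ a0 xpredT (fun a => #|fib a|)) => // amax _ hmax.
have hbig : 2 ^ m <= 2 ^ Lbits m * #|fib amax|.
  rewrite hsum.
  apply: (@leq_trans (\sum_(a : bitstr (Lbits m)) #|fib amax|)).
    by apply: leq_sum => a _; exact: hmax.
  by rewrite sum_nat_const card_ffun card_bool card_ord.
have : 0 < #|fib amax|.
  rewrite lt0n; apply/negP => /eqP h0; move: hbig; rewrite h0 muln0 leqn0 expn_eq0 //.
case/card_gt0P => x0; rewrite inE => /eqP hx0.
pose E := [set (sB y).1 | y in [pred y | perfect_matching y]].
exists E, (fun e : {set 'I_m} => \big[addb/false]_(i in e) x0 i); split.
- apply/forallP => e; apply/implyP => /imsetP [y hy ->]; apply/eqP; exact: hcard.
- apply: leq_trans hbig _; rewrite leq_mul2l; apply/orP; right.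
  apply: subset_leq_card; apply/subsetP => c; rewrite !inE => /eqP hc.
  apply/forallP => u; apply/forallP => v; apply/implyP => /imsetP [y hy hS].
  have nuv : u != v.
    apply/negP => /eqP huv; move: (hcard y hy); rewrite -hS huv setUid cards1 //.
  rewrite big_setU1 /= ?big_set1 ?inE //.
  have w1 := @wins_uv m c y _ _ _ (hwin c y hy) u v nuv hS.
  have w2 := @wins_uv m x0 y _ _ _ (hwin x0 y hy) u v nuv hS.
  by rewrite w1 hc -hx0 -w2.
- case: (boolP [exists x, m < 2 * #|component E x|]) => [/existsP //|].
  rewrite negb_exists => /forallP hall.
  have [y [hy hyE]] : exists y, perfect_matching y /\ forall S, S \in y -> S \notin E.
    apply: matching_avoid => // x; have := hall x; rewrite -leqNgt //.
  have [b1 [b2 [_ _ hSy _]]] := hwin x0 y hy.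
  have hin : (sB y).1 \in E by apply/imsetP; exists y.
  by move: (hyE _ hSy); rewrite hin.
Qed.
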